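(* Let $n\ge 1$ be an integer. (1) If $n$ is odd, let $m=3(n+1)$ and $S=\{1,\dots,\frac{n+1}{2}\}\cup\{\frac{3(n+1)}{2}+1,\dots,2n+1\}$. (2) If $n$ is even, let $m=3n+2$ and $S=\{1,\dots,\frac{n}{2}\}\cup\{\frac{3n+2}{2}+1,\dots,2n+1\}$. In either case let $D_n$ be the mixed graph on vertex set $\mathbb{Z}_m$ whose arcs are $(i,i+s)$ for all $i\in\mathbb{Z}_m$, $s\in S$, and whose edges are $\{i,i+m/2\}$ for all $i\in\mathbb{Z}_m$ (edges joining antipodal vertices). Then $D_n$ is $n$-arc-regular (every vertex is the tail of exactly $n$ arcs and the head of exactly $n$ arcs), $1$-edge-regular, and has girth $4$.
   Context: A mixed graph is a finite simple graph that may contain both edges and arcs. Walks traverse edges in either direction and arcs only in their direction; a cycle is a closed walk with no repeated vertices (other than start = end) and no repeated edge or arc; the girth is the length of a shortest cycle. *)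

(* Defs.v *)
From mathcomp Require Import all_boot.
Set Implicit Arguments. Unset Strict Implicit. Unset Printing Implicit Defensive.

(* A mixed graph on a finite vertex type V is given by an arc relation
   A (A u v : there is an arc from u to v) and an edge relation E
   (E u v : there is an (undirected) edge {u,v}; E is intended symmetric). *)

Definition arc_regular (V : finType) (A : rel V) (n : nat) : Prop :=
  forall v : V, #|[set w | A v w]| = n /\ #|[set w | A w v]| = n.

Definition edge_regular (V : finType) (E : rel V) (k : nat) : Prop :=
  forall v : V, #|[set w | E v w]| = k.

(* No arc or edge is used twice: arcs are
   distinct automatically since f is injective; for edges we forbid two
   different steps using the same unordered pair. *)
Definition is_cycle (V : finType) (A E : rel V) (k : nat)
    (f : 'I_k -> V) (b : 'I_k -> bool) : Prop :=
  0 < k /\ injective f /\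
  (forall i : 'I_k, if b i then A (f i) (f (ordS i)) else E (f i) (f (ordS i))) /\
  (forall i j : 'I_k, i != j -> ~~ b i -> ~~ b j ->
       ~ (f i = f (ordS j) /\ f (ordS i) = f j)).

Definition has_girth (V : finType) (A E : rel V) (g : nat) : Prop :=
  (exists (f : 'I_g -> V) (b : 'I_g -> bool), is_cycle A E f b) /\
  (forall k (f : 'I_k -> V) (b : 'I_k -> bool), is_cycle A E f b -> g <= k).

Definition Dm (n : nat) : nat := if odd n then 3 * n.+1 else 3 * n + 2.

Definition DS (n : nat) (s : nat) : bool :=
  if odd n then (1 <= s <= n.+1 %/ 2) || ((3 * n.+1) %/ 2 < s <= 2 * n + 1)
  else (1 <= s <= n %/ 2) || ((3 * n + 2) %/ 2 < s <= 2 * n + 1).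

Definition Darc (n : nat) : rel 'I_(Dm n) :=
  fun i j => [exists s : 'I_(Dm n), DS n s && (val j == (i + s) %% Dm n)].

Definition Dedge (n : nat) : rel 'I_(Dm n) :=
  fun i j => (val j == (i + Dm n %/ 2) %% Dm n) || (val i == (j + Dm n %/ 2) %% Dm n).

(* Main.v *)
Require Import Defs.
From mathcomp Require Import all_boot zify.
Set Implicit Arguments. Unset Strict Implicit.

Lemma cnt a b m : count (fun s => a <= s < b) (iota 0 m) = minn b m - a.
Proof.
elim: m => [|m IH]; first by rewrite /= minn0.
rewrite -addn1 iotaD count_cat IH /= addn0 add0n. lia.
Qed.

Lemma card_ordP m (P : pred nat) : #|[set s : 'I_m | P s]| = count P (iota 0 m).
Proof.
rewrite cardsE cardE /enum_mem size_filter -enumT -val_enum_ord count_map; apply: eq_count => x; exact: erefl.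
Qed.

Lemma Dm_spec n : (odd n /\ Dm n = 3 * n.+1) \/ (~~ odd n /\ Dm n = 3 * n + 2).
Proof. rewrite /Dm; case: (odd n); [left|right]; split => //. Qed.

Lemma DS_spec n s : DS n s = (odd n && ((1 <= s <= n.+1 %/ 2) || ((3 * n.+1) %/ 2 < s <= 2 * n + 1)))
  || (~~ odd n && ((1 <= s <= n %/ 2) || ((3 * n + 2) %/ 2 < s <= 2 * n + 1))).
Proof. by rewrite /DS; case: (odd n); rewrite /= ?orbF. Qed.

Lemma cntDS n : 1 <= n -> count (DS n) (iota 0 (Dm n)) = n.
Proof.
move=> hn.
pose A := (fun s => 1 <= s < (if odd n then n.+1 %/ 2 else n %/ 2).+1).
pose B := (fun s => (if odd n then (3 * n.+1) %/ 2 else (3 * n + 2) %/ 2).+1 <= s < (2 * n + 1).+1).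
have -> : count (DS n) (iota 0 (Dm n)) = count (predU A B) (iota 0 (Dm n)).
  by apply: eq_count => s; rewrite /DS /A /B /=; case: (odd n).
have H0 : count (predI A B) (iota 0 (Dm n)) = 0.
  apply/eqP; rewrite -leqn0 leqNgt -has_count; apply/hasPn => s _ /=.
  rewrite /A /B; case: (odd n); lia.
have := count_predUI A B (iota 0 (Dm n)); rewrite H0 addn0 => ->.
rewrite /A /B !cnt.
case: (Dm_spec n) => [[ho ->]|[ho ->]]; rewrite ?ho /=; [|rewrite (negbTE ho)]; lia.
Qed.

Lemma modE u d m : u < m -> d < m -> (u + d) %% m = if u + d < m then u + d else u + d - m.
Proof.
move=> hu hd; case: ifP => h; first by rewrite modn_small.
have -> : u + d = (u + d - m) + m by lia.
rewrite modnDr modn_small; lia.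
Qed.

Lemma Dm_even n : Dm n = 2 * (Dm n %/ 2).
Proof. case: (Dm_spec n) => [[ho ->]|[ho ->]]; lia. Qed.

Lemma DS_lt n s : DS n s -> s < Dm n.
Proof. rewrite DS_spec; case: (Dm_spec n) => [[ho ->]|[ho ->]]; lia. Qed.

Lemma stepA m u s v : v < m -> u < m -> s < m -> v = (u + s) %% m -> u + s = v \/ u + s = v + m.
Proof. move=> hv hu hs; rewrite modE //; case: ifP; lia. Qed.

Lemma arcP n (u v : 'I_(Dm n)) : Darc u v ->
  exists s, DS n s /\ (u + s = v \/ u + s = v + Dm n).
Proof.
case/existsP => s /andP [Hs /eqP Hv]; exists s; split => //.
by apply: stepA.
Qed.

Lemma stepE m h u v : m = 2 * h -> u < m -> v < m ->
  (v = (u + h) %% m \/ u = (v + h) %% m) -> u + h = v \/ u + h = v + m.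
Proof.
move=> he hu hv; have hh : h < m by lia.
rewrite !modE //; case: ifP; case: ifP; lia.
Qed.

Lemma edgeP n (u v : 'I_(Dm n)) : Dedge u v ->
  u + Dm n %/ 2 = v \/ u + Dm n %/ 2 = v + Dm n.
Proof.
move=> H; apply: stepE => //; first exact: Dm_even.
by case/orP: H => /eqP; [left|right].
Qed.

Lemma Dm_pos n : 0 < Dm n.
Proof. case: (Dm_spec n) => [[_ ->]|[_ ->]]; lia. Qed.

Lemma stepA' m u s v : v < m -> u < m -> s < m -> (u + s = v \/ u + s = v + m) -> v = (u + s) %% m.
Proof. move=> hv hu hs; rewrite modE //; case: ifP; lia. Qed.

Lemma inj_add m v a b : a < m -> b < m -> v < m -> (v + a) %% m = (v + b) %% m -> a = b.
Proof. move=> ha hb hv; rewrite !modE //; case: ifP; case: ifP; lia. Qed.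

Definition shift n (v s : 'I_(Dm n)) : 'I_(Dm n) := Ordinal (ltn_pmod (v + s) (Dm_pos n)).
Definition back n (v s : 'I_(Dm n)) : 'I_(Dm n) := Ordinal (ltn_pmod (v + (Dm n - s)) (Dm_pos n)).

Lemma DS_ge1 n s : DS n s -> 1 <= s.
Proof. rewrite DS_spec; lia. Qed.

Lemma back_inj m v a b : 1 <= a < m -> 1 <= b < m -> v < m ->
  (v + (m - a)) %% m = (v + (m - b)) %% m -> a = b.
Proof. move=> ha hb hv; rewrite !modE; try lia; case: ifP; case: ifP; lia. Qed.

Lemma back_ok1 m w s v : w < m -> 1 <= s < m -> v = (w + s) %% m -> w = (v + (m - s)) %% m.
Proof.
move=> hw hs ->; rewrite (@modE w s) //; last lia.
case: ifP => h1; rewrite modE; try lia; case: ifP; lia.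
Qed.

Lemma back_ok2 m s v : v < m -> 1 <= s < m -> v = ((v + (m - s)) %% m + s) %% m.
Proof.
move=> hv hs.
have -> : (v + (m - s)) %% m = (if v + (m - s) < m then v + (m - s) else v + (m - s) - m)
  by rewrite modE //; lia.
case: ifP => h1; rewrite modE; try lia; case: ifP; lia.
Qed.

Lemma arc_reg n : 1 <= n -> arc_regular (@Darc n) n.
Proof.
move=> hn v; have hv := ltn_ord v.
have HS : #|[set s : 'I_(Dm n) | DS n s]| = n by rewrite card_ordP cntDS.
split.
- have -> : [set w | Darc v w] = @shift n v @: [set s : 'I_(Dm n) | DS n s].
    apply/setP => w; rewrite inE; apply/idP/imsetP.
    + case/existsP => s /andP [Hs /eqP Hw]; exists s; first by rewrite inE.
      by apply: val_inj.
    + case=> s; rewrite inE => Hs ->; apply/existsP; exists s; by rewrite Hs /=.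
  rewrite card_in_imset // => a b _ _ /(congr1 val) /= H; apply: val_inj.
  move: H; apply: inj_add; by rewrite ?ltn_ord.
- have -> : [set w | Darc w v] = @back n v @: [set s : 'I_(Dm n) | DS n s].
    apply/setP => w; rewrite inE; apply/idP/imsetP.
    + case/existsP => s /andP [Hs /eqP Hw]; exists s; first by rewrite inE.
      apply: val_inj => /=; apply: back_ok1 => //. rewrite (ltn_ord s) andbT; exact: (DS_ge1 Hs).
    + case=> s; rewrite inE => Hs ->; apply/existsP; exists s; rewrite Hs /=.
      apply/eqP; apply: back_ok2 => //; rewrite (ltn_ord s) andbT; exact: (DS_ge1 Hs).
  rewrite card_in_imset // => a b; rewrite !inE => ha hb /(congr1 val) /= H; apply: val_inj.
  apply: (back_inj _ _ hv H); [rewrite (ltn_ord a) andbT; exact: DS_ge1 ha | rewrite (ltn_ord b) andbT; exact: DS_ge1 hb].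
Qed.

Lemma edge_reg n : edge_regular (@Dedge n) 1.
Proof.
move=> v.
pose e : 'I_(Dm n) := Ordinal (ltn_pmod (v + Dm n %/ 2) (Dm_pos n)).
have -> : [set w | Dedge v w] = [set e]; last exact: cards1.
apply/setP => w; rewrite !inE; apply/idP/eqP.
- move/edgeP => H; apply: val_inj => /=; apply: stepA' => //; rewrite ?ltn_ord //.
  have := Dm_even n; have := Dm_pos n; lia.
- by move=> ->; rewrite /Dedge /= eqxx.
Qed.

Definition stp n (b : bool) (x y : nat) : Prop :=
  if b then exists s, DS n s /\ (x + s = y \/ x + s = y + Dm n)
  else (x + Dm n %/ 2 = y \/ x + Dm n %/ 2 = y + Dm n).

Lemma stp_of n k (f : 'I_k -> 'I_(Dm n)) (b : 'I_k -> bool) :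
  (forall i, if b i then Darc (f i) (f (ordS i)) else Dedge (f i) (f (ordS i))) ->
  forall i j, ordS i = j -> stp n (b i) (f i) (f j).
Proof.
move=> H i j <-; have := H i; rewrite /stp; case: (b i) => h.
- exact: arcP.
- exact: edgeP.
Qed.

Lemma no1 n x b : stp n b x x -> False.
Proof.
have he := Dm_even n; have hp := Dm_pos n.
case: b => /=; last by lia.
case=> s [hs h]; have := DS_lt hs; have := DS_ge1 hs; lia.
Qed.

Lemma no2 n x y b0 b1 : x <> y -> b0 || b1 -> stp n b0 x y -> stp n b1 y x -> False.
Proof.
have he := Dm_even n; have hp := Dm_pos n; have hs := Dm_spec n.
move=> hxy; case: b0; case: b1 => //= _.
- case=> s [hs1 h1] [t [ht h2]]; move: hs1 ht; rewrite !DS_spec; lia.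
- case=> s [hs1 h1] h2; move: hs1; rewrite !DS_spec; lia.
- move=> h1 [s [hs1 h2]]; move: hs1; rewrite !DS_spec; lia.
Qed.


Definition sl a h L s := (1 <= s <= a) \/ (h < s <= L).
Definition stpP (P : nat -> Prop) m h (b : bool) x y :=
  if b then exists s, P s /\ (x + s = y \/ x + s = y + m) else (x + h = y \/ x + h = y + m).

Lemma no3_gen a h L m x y z b0 b1 b2 :
  (forall s t u, sl a h L s -> sl a h L t -> sl a h L u -> s + t + u <> m /\ s + t + u <> 2 * m /\ s + t + u <> 0) ->
  (forall s t, sl a h L s -> sl a h L t -> s + t <> h /\ s + t <> h + m /\ s + t <> h + 2 * m) ->
  (forall s, sl a h L s -> 0 < s < m) ->
  m = 2 * h -> 0 < h ->
  x < m -> y < m -> z < m ->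
  x <> y -> y <> z -> x <> z ->
  stpP (sl a h L) m h b0 x y -> stpP (sl a h L) m h b1 y z -> stpP (sl a h L) m h b2 z x -> False.
Proof.
move=> H3 H2 H1 hm hh hx hy hz hxy hyz hxz.
case: b0; case: b1; case: b2 => /=.
- move=> [s [Hs e0]] [t [Ht e1]] [u [Hu e2]]; have := H3 _ _ _ Hs Ht Hu; have := H1 _ Hs; have := H1 _ Ht; have := H1 _ Hu; lia.
- move=> [s [Hs e0]] [t [Ht e1]] e2; have := H2 _ _ Hs Ht; have := H1 _ Hs; have := H1 _ Ht; lia.
- move=> [s [Hs e0]] e1 [u [Hu e2]]; have := H2 _ _ Hu Hs; have := H1 _ Hs; have := H1 _ Hu; lia.
- move=> [s [Hs e0]] e1 e2; have := H1 _ Hs; lia.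
- move=> e0 [t [Ht e1]] [u [Hu e2]]; have := H2 _ _ Ht Hu; have := H1 _ Ht; have := H1 _ Hu; lia.
- move=> e0 [s [Hs e1]] e2; have := H1 _ Hs; lia.
- move=> e0 e1 [s [Hs e2]]; have := H1 _ Hs; lia.
- move=> e0 e1 e2; lia.
Qed.

Lemma par n : 1 <= n -> exists a, 1 <= a /\
  ((Dm n = 6 * a /\ Dm n %/ 2 = 3 * a /\ forall s, DS n s -> sl a (3 * a) (4 * a - 1) s) \/
   (Dm n = 6 * a + 2 /\ Dm n %/ 2 = 3 * a + 1 /\ forall s, DS n s -> sl a (3 * a + 1) (4 * a + 1) s)).
Proof.
move=> hn; case: (Dm_spec n) => [[ho hm]|[ho hm]].
- exists (n.+1 %/ 2); split; first lia.
  left; rewrite hm; split; first lia; split; first lia.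
  move=> s; rewrite /sl /DS ho; lia.
- exists (n %/ 2); split; first lia.
  right; rewrite hm; split; first lia; split; first lia.
  move=> s; rewrite /sl /DS (negbTE ho); lia.
Qed.

Lemma stp_P n (P : nat -> Prop) m h b x y : (forall s, DS n s -> P s) -> Dm n = m -> Dm n %/ 2 = h ->
  stp n b x y -> stpP P m h b x y.
Proof.
move=> HP <- <-; rewrite /stp /stpP; case: b => //.
case=> s [Hs e]; exists s; split; [exact: HP | exact: e].
Qed.

Lemma no3' n x y z b0 b1 b2 : 1 <= n -> x < Dm n -> y < Dm n -> z < Dm n ->
  x <> y -> y <> z -> x <> z ->
  stp n b0 x y -> stp n b1 y z -> stp n b2 z x -> False.
Proof.
move=> hn hx hy hz hxy hyz hxz s0 s1 s2.
case: (par hn) => a [ha [[hm [hh HP]]|[hm [hh HP]]]].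
{ apply: (@no3_gen a (3 * a) (4 * a - 1) (6 * a) x y z b0 b1 b2).
  1: rewrite /sl => s t u; lia.
  1: rewrite /sl => s t; lia.
  1: rewrite /sl => s; lia.
  all: try lia.
  all: apply: (@stp_P n (sl a (3 * a) (4 * a - 1)) _ _ _ _ _ HP) => //; lia. }
{ apply: (@no3_gen a (3 * a + 1) (4 * a + 1) (6 * a + 2) x y z b0 b1 b2).
  1: rewrite /sl => s t u; lia.
  1: rewrite /sl => s t; lia.
  1: rewrite /sl => s; lia.
  all: try lia.
  all: apply: (@stp_P n (sl a (3 * a + 1) (4 * a + 1)) _ _ _ _ _ HP) => //; lia. }
Qed.

Lemma girth_lb n (hn : 1 <= n) k (f : 'I_k -> 'I_(Dm n)) b : is_cycle (@Darc n) (@Dedge n) f b -> 4 <= k.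
Proof.
case=> k0 [inj [st cond]].
have S := stp_of st.
have D : forall i j, i != j -> val (f i) <> val (f j).
  by move=> i j /eqP ne h; apply: ne; apply: inj; apply: val_inj.
rewrite leqNgt; apply/negP => hk.
move: k0 hk f b inj st cond S D; case: k => [|[|[|[|k]]]] //= _ _ f b _ _ cond S D.
- pose i0 := @Ordinal 1 0 isT.
  apply: (@no1 n (f i0) (b i0)); apply: S; exact: val_inj.
- pose i0 := @Ordinal 2 0 isT; pose i1 := @Ordinal 2 1 isT.
  have h01 : ordS i0 = i1 by apply: val_inj.
  have h10 : ordS i1 = i0 by apply: val_inj.
  apply: (@no2 n _ _ (b i0) (b i1) (D i0 i1 isT) _ (S _ _ h01) (S _ _ h10)).
  case E0: (b i0); case E1: (b i1) => //.
  exfalso; apply: (cond i0 i1 isT); rewrite ?E0 ?E1 // h01 h10; by split.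
- pose i0 := @Ordinal 3 0 isT; pose i1 := @Ordinal 3 1 isT; pose i2 := @Ordinal 3 2 isT.
  have h01 : ordS i0 = i1 by apply: val_inj.
  have h12 : ordS i1 = i2 by apply: val_inj.
  have h20 : ordS i2 = i0 by apply: val_inj.
  exact: (@no3' n _ _ _ (b i0) (b i1) (b i2) hn (ltn_ord _) (ltn_ord _) (ltn_ord _) (D i0 i1 isT) (D i1 i2 isT) (D i0 i2 isT)
           (S _ _ h01) (S _ _ h12) (S _ _ h20)).
Qed.

Definition cc n := if odd n then n.+1 %/ 2 else n %/ 2.

Lemma cc_spec n : (odd n /\ cc n = n.+1 %/ 2) \/ (~~ odd n /\ cc n = n %/ 2).
Proof. rewrite /cc; case: (odd n); [left|right]; split => //. Qed.

Lemma fb n (hn : 1 <= n) (i : 'I_4) : i * cc n < Dm n.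
Proof.
have := cc_spec n; have := Dm_spec n.
case: i => [[|[|[|[|i]]]] hi] //= ; lia.
Qed.

Definition fc n (hn : 1 <= n) (i : 'I_4) : 'I_(Dm n) := Ordinal (fb hn i).
Definition bc n (i : 'I_4) := ~~ odd n || (val i != 3).

Lemma arc_mk n (u v : 'I_(Dm n)) s : s < Dm n -> DS n s ->
  (u + s = v \/ u + s = v + Dm n) -> Darc u v.
Proof.
move=> hs Ds h; apply/existsP; exists (Ordinal hs); rewrite /= Ds /=; apply/eqP.
by apply: stepA' => //; exact: ltn_ord.
Qed.

Lemma edge_mk n (u v : 'I_(Dm n)) :
  (u + Dm n %/ 2 = v \/ u + Dm n %/ 2 = v + Dm n) -> Dedge u v.
Proof.
move=> h; apply/orP; left; apply/eqP; apply: stepA' => //; try exact: ltn_ord.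
have := Dm_even n; have := Dm_pos n; lia.
Qed.

Lemma girth_ub n (hn : 1 <= n) : is_cycle (@Darc n) (@Dedge n) (fc hn) (@bc n).
Proof.
have hc := cc_spec n; have hm := Dm_spec n.
have m1 : 1 %% 4 = 1 by []. have m2 : 2 %% 4 = 2 by [].
have m3 : 3 %% 4 = 3 by []. have m4 : 4 %% 4 = 0 by [].
split => //; split.
  move=> i j /(congr1 val) /= h; apply: val_inj.
  have cpos : 0 < cc n by lia.
  by apply/eqP; rewrite -(eqn_pmul2r cpos) h.
split.
  case=> [[|[|[|[|i]]]] hi] //=; rewrite /bc /=.
  - rewrite orbT; apply: (@arc_mk _ _ _ (cc n)); rewrite ?DS_spec /= ?m1 ?m2 ?m3 ?m4; lia.
  - rewrite orbT; apply: (@arc_mk _ _ _ (cc n)); rewrite ?DS_spec /= ?m1 ?m2 ?m3 ?m4; lia.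
  - rewrite orbT; apply: (@arc_mk _ _ _ (cc n)); rewrite ?DS_spec /= ?m1 ?m2 ?m3 ?m4; lia.
  - case: (boolP (odd n)) => ho /=.
    + apply: edge_mk => /=; rewrite ?m4; lia.
    + apply: (@arc_mk _ _ _ (3 * cc n + 2)); rewrite ?DS_spec /= ?m1 ?m2 ?m3 ?m4; lia.
move=> i j ne; rewrite /bc !negb_or => /andP[_ /negPn /eqP hi] /andP[_ /negPn /eqP hj].
exfalso; move/eqP: ne; apply; apply: val_inj; by rewrite hi hj.
Qed.

Unset Implicit Arguments.

Theorem lemma8 (n : nat) (hn : 1 <= n) :
  arc_regular (@Darc n) n /\ edge_regular (@Dedge n) 1 /\
  has_girth (@Darc n) (@Dedge n) 4.
Proof.
split; first exact: arc_reg.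
split; first exact: edge_reg.
split.
- exists (fc hn), (@bc n); exact: girth_ub.
- move=> k f b; exact: girth_lb.
Qed.
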